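(* Let $A$ be a race-free game and $\delta_A:D_A\to A^\perp\parallel A\parallel A$ the duplication map defined in the context. Then $D_A$ is deterministic (i.e. $\delta_A$ is a deterministic edc strategy) iff no two Opponent moves of $A$ are in immediate conflict: whenever $x$ is a configuration of $A$ and $a_1,a_2\notin x$ with $\mathrm{pol}_A(a_1)=\mathrm{pol}_A(a_2)=-$ and $x\cup\{a_1\}$, $x\cup\{a_2\}$ configurations, $x\cup\{a_1,a_2\}$ is a configuration of $A$.
   Context: A game $A$ is a prime event structure $(A,\le,\mathrm{Con})$ (partial order with finite down-sets; nonempty subset-closed family of finite consistent sets containing singletons with $X\in\mathrm{Con}$, $e\le e'\in X\Rightarrow X\cup\{e\}\in\mathrm{Con}$) with a polarity function $\mathrm{pol}_A:A\to\{+,-\}$; configurations are down-closed sets with all finite subsets consistent. It is race-free if $x\cup\{a\}$, $x\cup\{a'\}$ configurations with $a,a'$ of opposite polarity imply $x\cup\{a,a'\}$ is a configuration. $A^\perp$ reverses polarity. $A^\perp\parallel A\parallel A$ has events $(\{0\}\times A)\cup(\{1\}\times A)\cup(\{2\}\times A)$ with componentwise order, consistency (finite set consistent iff each component part is), and polarity (component 0 reversed). Duplication: a triple $(x,y_1,y_2)$ with $x$ a finite configuration of $A^\perp$ and $y_1,y_2$ finite configurations of $A$ is balanced if every $a\in y_1\cup y_2$ with $\mathrm{pol}_A(a)=+$ lies in $x$, and every $a\in x$ with $\mathrm{pol}_{A^\perp}(a)=+$ lies in $y_1$ or $y_2$. A choice function is $\chi:x^+\to\{1,2\}$ ($x^+$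 the events of $x$ positive in $A^\perp$) with $\chi(a)=i\Rightarrow a\in y_i$. The order $q(x,y_1,y_2;\chi)$ has underlying set $(\{0\}\times x)\cup(\{1\}\times y_1)\cup(\{2\}\times y_2)$ and the partial order generated by the order inherited from $A^\perp\parallel A\parallel A$ together with $(0,a)\le(i,a)$ for $a\in y_i$ with $\mathrm{pol}_A(a)=+$ ($i=1,2$), and $(\chi(a),a)\le(0,a)$ for $a\in x$ with $\mathrm{pol}_{A^\perp}(a)=+$. The edc $D_A$ has as events all such $q(x,y_1,y_2;\chi)$ possessing a top element, and $\delta_A(d)$ is the top element of $d$; $d\le d'$ iff the underlying set of $d$ is a down-closed subset of that of $d'$ and the order of $d$ is the restriction of that of $d'$; a finite $X\subseteq D_A$ is consistent iff $\delta_A$ of its down-closure is consistent in $A^\perp\parallel A\parallel A$; $d\equiv d'$ iff $\delta_A(d)=\delta_A(d')$; $\mathrm{pol}(d)$ is the polarity of $\delta_A(d)$. An edc with polarity $S$ (and any strategy with domain $S$) is deterministic if for every finite $X\subseteq S$, consistency of the set of negative events of the down-closure $[X]$ implies $X$ is consistent. *)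

(* Defs.v *)
From Stdlib Require Import List Relations.

Set Implicit Arguments.

Inductive polarity := Plus | Minus.

Definition neg_pol (p : polarity) : polarity :=
  match p with Plus => Minus | Minus => Plus end.

Definition finite {T : Type} (X : T -> Prop) : Prop :=
  exists l : list T, forall t, X t -> In t l.

Record game := Game {
  ev : Type;
  leA : ev -> ev -> Prop;
  ConA : (ev -> Prop) -> Prop;
  polA : ev -> polarity;
  leA_refl : forall e, leA e e;
  leA_antisym : forall e e', leA e e' -> leA e' e -> e = e';
  leA_trans : forall e1 e2 e3, leA e1 e2 -> leA e2 e3 -> leA e1 e3;
  leA_finite_down : forall e, finite (fun e' => leA e' e);
  ConA_finite : forall X, ConA X -> finite X;
  ConA_ext : forall X Y, ConA X -> (forall e, X e <-> Y e) -> ConA Y;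
  ConA_nonempty : exists X, ConA X;
  ConA_sub : forall X Y, ConA X -> (forall e, Y e -> X e) -> ConA Y;
  ConA_single : forall e, ConA (fun e' => e' = e);
  ConA_down : forall X e e', ConA X -> X e' -> leA e e' ->
                 ConA (fun z => X z \/ z = e)
}.

Section Game.
Variable A : game.

Definition configuration (x : ev A -> Prop) : Prop :=
  (forall e e', x e -> leA A e' e -> x e') /\
  (forall Y, finite Y -> (forall e, Y e -> x e) -> ConA A Y).

Definition add1 (x : ev A -> Prop) (a : ev A) : ev A -> Prop :=
  fun e => x e \/ e = a.

Definition race_free : Prop :=
  forall (x : ev A -> Prop) (a a' : ev A),
    configuration x -> polA A a' = neg_pol (polA A a) ->
    configuration (add1 x a) -> configuration (add1 x a') ->
    configuration (add1 (add1 x a) a').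

Definition no_neg_conflict : Prop :=
  forall (x : ev A -> Prop) (a1 a2 : ev A),
    configuration x -> ~ x a1 -> ~ x a2 ->
    polA A a1 = Minus -> polA A a2 = Minus ->
    configuration (add1 x a1) -> configuration (add1 x a2) ->
    configuration (add1 (add1 x a1) a2).

(* A^perp || A || A : components 0, 1, 2 *)
Inductive comp := C0 | C1 | C2.

Definition pev : Type := (comp * ev A)%type.

Definition polP (e : pev) : polarity :=
  match fst e with C0 => neg_pol (polA A (snd e)) | _ => polA A (snd e) end.

Definition leP (e e' : pev) : Prop := fst e = fst e' /\ leA A (snd e) (snd e').

Definition ConP (S : pev -> Prop) : Prop :=
  ConA A (fun a => S (C0, a)) /\ ConA A (fun a => S (C1, a)) /\
  ConA A (fun a => S (C2, a)).

(* configurations of A^perp are those of A (same order and consistency) *)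
Definition fin_config (x : ev A -> Prop) : Prop := configuration x /\ finite x.

Definition balanced (x y1 y2 : ev A -> Prop) : Prop :=
  (forall a, (y1 a \/ y2 a) -> polA A a = Plus -> x a) /\
  (forall a, x a -> neg_pol (polA A a) = Plus -> y1 a \/ y2 a).

(* chi : x^+ -> {1,2} with chi a = i -> a in y_i; values outside x^+ are irrelevant *)
Definition choice_fun (x y1 y2 : ev A -> Prop) (chi : ev A -> comp) : Prop :=
  forall a, x a -> neg_pol (polA A a) = Plus ->
    (chi a = C1 /\ y1 a) \/ (chi a = C2 /\ y2 a).

Definition qset (x y1 y2 : ev A -> Prop) (e : pev) : Prop :=
  match fst e with C0 => x (snd e) | C1 => y1 (snd e) | C2 => y2 (snd e) end.

Definition qstep (x y1 y2 : ev A -> Prop) (chi : ev A -> comp) (e e' : pev) : Prop :=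
  qset x y1 y2 e /\ qset x y1 y2 e' /\
  ( leP e e'
  \/ (exists a, e = (C0, a) /\ e' = (C1, a) /\ y1 a /\ polA A a = Plus)
  \/ (exists a, e = (C0, a) /\ e' = (C2, a) /\ y2 a /\ polA A a = Plus)
  \/ (exists a, e = (chi a, a) /\ e' = (C0, a) /\ x a /\ neg_pol (polA A a) = Plus)).

Definition qle (x y1 y2 : ev A -> Prop) (chi : ev A -> comp) (e e' : pev) : Prop :=
  qset x y1 y2 e /\ qset x y1 y2 e' /\ clos_refl_trans pev (qstep x y1 y2 chi) e e'.

(* events of D_A: q(x,y1,y2;chi) possessing a top element (recorded as dtop;
   the top element of a partial order is unique) *)
Record Dev := MkDev {
  dx : ev A -> Prop;
  dy1 : ev A -> Prop;
  dy2 : ev A -> Prop;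
  dchi : ev A -> comp;
  dtop : pev;
  dx_fc : fin_config dx;
  dy1_fc : fin_config dy1;
  dy2_fc : fin_config dy2;
  d_bal : balanced dx dy1 dy2;
  d_choice : choice_fun dx dy1 dy2 dchi;
  dtop_in : qset dx dy1 dy2 dtop;
  dtop_top : forall e, qset dx dy1 dy2 e -> qle dx dy1 dy2 dchi e dtop
}.

Definition Dset (d : Dev) : pev -> Prop := qset (dx d) (dy1 d) (dy2 d).
Definition Dord (d : Dev) : pev -> pev -> Prop := qle (dx d) (dy1 d) (dy2 d) (dchi d).

Definition delta (d : Dev) : pev := dtop d.

Definition leD (d d' : Dev) : Prop :=
  (forall e, Dset d e -> Dset d' e) /\
  (forall e e', Dset d e -> Dord d' e' e -> Dset d e') /\
  (forall e e', Dset d e -> Dset d e' -> (Dord d e e' <-> Dord d' e e')).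

Definition polD (d : Dev) : polarity := polP (delta d).

Definition downD (X : Dev -> Prop) (d : Dev) : Prop :=
  exists d', X d' /\ leD d d'.

Definition ConD (X : Dev -> Prop) : Prop :=
  ConP (fun e => exists d, downD X d /\ delta d = e).

Definition D_deterministic : Prop :=
  forall X : Dev -> Prop, finite X ->
    ConD (fun d => downD X d /\ polD d = Minus) -> ConD X.

End Game.

(* Main.v *)
Require Import Defs.
From Stdlib Require Import List Relations Classical ClassicalEpsilon Lia.

Lemma finite_sub (T : Type) (P Q : T -> Prop) :
  finite P -> (forall a, Q a -> P a) -> finite Q.
Proof. intros [l Hl] H; exists l; auto. Qed.

Lemma finite_union (I T : Type) (l : list I) (P : I -> T -> Prop) :
  (forall i, finite (P i)) -> finite (fun a => exists i, In i l /\ P i a).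
Proof.
  intros HP; induction l as [|i l IH].
  - exists nil; intros t [i [[] _]].
  - destruct (HP i) as [l1 H1]; destruct IH as [l2 H2].
    exists (l1 ++ l2); intros t [j [[<-|Hj] Ht]]; apply in_or_app; [left; auto|right].
    apply H2; eauto.
Qed.

Lemma con_empty (A : game) (Y : ev A -> Prop) : (forall e, ~ Y e) -> ConA A Y.
Proof.
  intros H; destruct (ConA_nonempty A) as [X HX]; apply (ConA_sub A X); auto.
  intros e He; exfalso; eapply H; eauto.
Qed.

Lemma down_con (A : game) (e : ev A) : ConA A (fun b => leA A b e).
Proof.
  destruct (leA_finite_down A e) as [l Hl].
  assert (H : forall k, ConA A (fun b => b = e \/ (In b k /\ leA A b e))).
  { induction k as [|c k IH].
    - apply (ConA_ext A (fun e' => e' = e)); [apply ConA_single|].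
      intros z; simpl; tauto.
    - destruct (classic (leA A c e)) as [Hc|Hc].
      + apply (ConA_ext A _ _ (ConA_down A _ c e IH (or_introl eq_refl) Hc)).
        intros z; simpl; split.
        * intros [[Hz|[Hz1 Hz2]]|Hz]; subst; auto.
        * intros [Hz|[[Hz1|Hz1] Hz2]]; subst; auto.
      + apply (ConA_ext A _ _ IH). intros z; simpl; split.
        * intros [Hz|[Hz1 Hz2]]; auto.
        * intros [Hz|[[Hz1|Hz1] Hz2]]; subst; auto. contradiction. }
  apply (ConA_sub A _ _ (H l)). intros b Hb; right; auto.
Qed.

Lemma config_con (A : game) (x S : ev A -> Prop) :
  configuration A x -> finite S -> (forall a, S a -> x a) -> ConA A S.
Proof. intros [_ H] ? ?; apply H; auto. Qed.

Lemma fc_sub (A : game) (P Q : ev A -> Prop) :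
  fin_config A P -> (forall a, Q a -> P a) -> (forall a b, Q a -> leA A b a -> Q b) ->
  fin_config A Q.
Proof.
  intros [[_ HP] Hf] HQ Hd. split; [split|].
  - intros e e' He Hl; eauto.
  - intros Y HY HYQ; apply HP; auto.
  - eapply finite_sub; eauto.
Qed.

Lemma down_fc (A : game) (e : ev A) : fin_config A (fun b => leA A b e).
Proof.
  split; [split|].
  - intros a b Ha Hb; eapply leA_trans; eauto.
  - intros Y _ HY; apply (ConA_sub A _ _ (down_con A e)); auto.
  - apply leA_finite_down.
Qed.

Definition cnt (T : Type) (P : T -> Prop) (l : list T) : nat :=
  length (filter (fun z => if excluded_middle_informative (P z) then true else false) l).

Arguments cnt {T}.

Lemma cnt_le (T : Type) (P Q : T -> Prop) l :
  (forall z, Q z -> P z) -> cnt Q l <= cnt P l.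
Proof.
  intros H; induction l as [|a l IH]; unfold cnt in *; simpl; auto.
  destruct (excluded_middle_informative (Q a)); destruct (excluded_middle_informative (P a));
    simpl; try lia. exfalso; auto.
Qed.

Lemma cnt_lt (T : Type) (P Q : T -> Prop) l z0 :
  (forall z, Q z -> P z) -> In z0 l -> P z0 -> ~ Q z0 -> cnt Q l < cnt P l.
Proof.
  intros H Hin HP HQ; induction l as [|a l IH]; [destruct Hin|].
  destruct Hin as [<-|Hin].
  - pose proof (cnt_le T P Q l H). unfold cnt in *; simpl.
    rename a into z0.
    destruct (excluded_middle_informative (Q z0)); [contradiction|].
    destruct (excluded_middle_informative (P z0)); [|contradiction]. simpl; lia.
  - specialize (IH Hin). unfold cnt in *; simpl.
    destruct (excluded_middle_informative (Q a)); destruct (excluded_middle_informative (P a));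
      simpl; try lia. exfalso; auto.
Qed.

Lemma exists_max (A : game) (S : ev A -> Prop) (l : list (ev A)) :
  (forall a, S a -> In a l) -> forall s, S s ->
  exists m, S m /\ leA A s m /\ forall u, S u -> leA A m u -> u = m.
Proof.
  intros Hl.
  assert (H : forall n s, S s -> cnt (fun u => S u /\ leA A s u) l < n ->
    exists m, S m /\ leA A s m /\ forall u, S u -> leA A m u -> u = m).
  { induction n as [|n IH]; intros s Hs Hc; [lia|].
    destruct (classic (exists t, S t /\ leA A s t /\ t <> s)) as [[t [Ht [Hst Hne]]]|Hno].
    - assert (Hlt : cnt (fun u => S u /\ leA A t u) l < cnt (fun u => S u /\ leA A s u) l).
      { apply (cnt_lt _ _ _ l s).
        - intros z [Hz1 Hz2]; split; auto; eapply leA_trans; eauto.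
        - auto.
        - split; auto; apply leA_refl.
        - intros [_ Hts]; apply Hne; apply leA_antisym; auto. }
      destruct (IH t Ht ltac:(lia)) as [m [Hm1 [Hm2 Hm3]]].
      exists m; repeat split; auto; eapply leA_trans; eauto.
    - exists s; repeat split; auto; [apply leA_refl|].
      intros u Hu Hsu; apply NNPP; intro Hne; apply Hno; eauto. }
  intros s Hs; eapply H; eauto.
Qed.

Lemma key (A : game) (hrf : race_free A) (hnn : no_neg_conflict A)
  (T : ev A -> Prop) (HT : ConA A T) (l : list (ev A)) :
  forall n (S : ev A -> Prop), (forall a, S a -> In a l) -> cnt S l < n ->
  (forall a b, S a -> leA A b a -> S b) ->
  (forall a b, S a -> polA A a = Plus -> leA A b a -> T b) -> ConA A S.
Proof.
  induction n as [|n IH]; intros S Hl Hc Hd HP; [lia|].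
  assert (Hfin : finite S) by (exists l; auto).
  destruct (classic (ConA A S)) as [H|Hn]; [exact H|exfalso].
  destruct (classic (forall s, S s -> exists a, S a /\ polA A a = Plus /\ leA A s a))
    as [Hall|Hnall].
  { apply Hn, (ConA_sub A T); auto. intros s Hs.
    destruct (Hall s Hs) as [a [? [? ?]]]; eauto. }
  apply not_all_ex_not in Hnall; destruct Hnall as [s Hs].
  apply imply_to_and in Hs; destruct Hs as [Hs Hnp].
  destruct (exists_max A S l Hl s Hs) as [m [Hm [Hsm Hmax]]].
  assert (Hpm : polA A m = Minus).
  { destruct (polA A m) eqn:E; auto. exfalso; apply Hnp; eauto. }
  assert (Hrem : forall m0, S m0 -> (forall u, S u -> leA A m0 u -> u = m0) ->
            ConA A (fun z => S z /\ z <> m0)).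
  { intros m0 Hm0 Hmax0. apply (IH (fun z => S z /\ z <> m0)).
    - intros a [Ha _]; auto.
    - pose proof (cnt_lt _ S (fun z => S z /\ z <> m0) l m0 ltac:(intros z [? ?]; auto)
        (Hl m0 Hm0) Hm0 ltac:(intros [_ H]; auto)). simpl in *; lia.
    - intros a b [Ha Hne] Hba; split; eauto. intros ->; apply Hne; apply Hmax0; auto.
    - intros a b [Ha _]; eauto. }
  destruct (classic (forall z, S z -> leA A z m)) as [Hbelow|Hnb].
  { apply Hn, (ConA_sub A _ _ (down_con A m)); auto. }
  apply not_all_ex_not in Hnb; destruct Hnb as [z Hz].
  apply imply_to_and in Hz; destruct Hz as [Hz Hzm].
  destruct (exists_max A S l Hl z Hz) as [m' [Hm' [Hzm' Hmax']]].
  assert (Hne : m' <> m) by (intros ->; auto).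
  set (z0 := fun w => S w /\ w <> m /\ w <> m').
  assert (HS1 := Hrem m Hm Hmax). assert (HS2 := Hrem m' Hm' Hmax').
  assert (Hdz : forall w w', S w -> leA A w' w -> w' = m -> w = m).
  { intros w w' Hw Hl' ->; apply Hmax; auto. }
  assert (Hdz' : forall w w', S w -> leA A w' w -> w' = m' -> w = m').
  { intros w w' Hw Hl' ->; apply Hmax'; auto. }
  assert (Cz : configuration A z0).
  { split.
    - intros w w' [Hw [H1 H2]] Hl'; repeat split; eauto.
    - intros Y _ HY; apply (ConA_sub A _ _ HS1). intros e He; destruct (HY e He) as [? [? ?]]; auto. }
  assert (C1 : configuration A (add1 A z0 m)).
  { split.
    - intros w w' Hw Hl'. destruct (classic (w' = m)) as [->|Hw'm]; [right; auto|left].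
      destruct Hw as [[Hw [H1 H2]]| ->].
      + repeat split; eauto.
      + repeat split; eauto; try (intros ->; apply Hne; symmetry; apply Hmax'; auto).
    - intros Y _ HY; apply (ConA_sub A _ _ HS2). intros e He.
      destruct (HY e He) as [[? [? ?]]| ->]; split; auto. }
  assert (C2 : configuration A (add1 A z0 m')).
  { split.
    - intros w w' Hw Hl'. destruct (classic (w' = m')) as [->|Hw'm]; [right; auto|left].
      destruct Hw as [[Hw [H1 H2]]| ->].
      + repeat split; eauto.
      + repeat split; eauto; try (intros ->; apply Hne; apply Hmax; auto).
    - intros Y _ HY; apply (ConA_sub A _ _ HS1). intros e He.
      destruct (HY e He) as [[? [? ?]]| ->]; split; auto. }
  assert (C3 : configuration A (add1 A (add1 A z0 m) m')).
  { destruct (polA A m') eqn:E.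
    - apply hrf; auto. rewrite E, Hpm; reflexivity.
    - apply hnn; auto.
      + intros [_ [H _]]; auto.
      + intros [_ [_ H]]; auto. }
  apply Hn. apply (config_con A _ _ C3 Hfin).
  intros w Hw. destruct (classic (w = m')) as [->|H1]; [right; auto|left].
  destruct (classic (w = m)) as [->|H2]; [right; auto|left]. repeat split; auto.
Qed.

Lemma crt_mono (T : Type) (R R' : T -> T -> Prop) :
  (forall u v, R u v -> R' u v) -> forall u v, clos_refl_trans T R u v -> clos_refl_trans T R' u v.
Proof. intros H u v Huv; induction Huv; eauto using rt_step, rt_refl, rt_trans. Qed.

Lemma qle_trans (A : game) x y1 y2 chi (u v w : pev A) :
  qle x y1 y2 chi u v -> qle x y1 y2 chi v w -> qle x y1 y2 chi u w.
Proof. intros [? [? ?]] [? [? ?]]; repeat split; eauto using rt_trans. Qed.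

Lemma qle_step (A : game) x y1 y2 chi (u v : pev A) :
  qstep x y1 y2 chi u v -> qle x y1 y2 chi u v.
Proof. intros H; destruct H as [? [? ?]] eqn:E; repeat split; auto. apply rt_step; auto. Qed.

Lemma qle_refl (A : game) x y1 y2 chi (u : pev A) :
  qset x y1 y2 u -> qle x y1 y2 chi u u.
Proof. intros; repeat split; auto. apply rt_refl. Qed.


Definition rset (A : game) (d : Dev A) (e : pev A) (c : comp) : ev A -> Prop :=
  fun a => Dord d (c, a) e.
Arguments rset {A}.

Lemma qset_r (A : game) (d : Dev A) (e u : pev A) :
  qset (rset d e C0) (rset d e C1) (rset d e C2) u <-> Dord d u e.
Proof. destruct u as [[] a]; simpl; unfold rset; tauto. Qed.

Lemma restr_path (A : game) (d : Dev A) (e : pev A) : forall s t,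
  clos_refl_trans (pev A) (qstep (dx d) (dy1 d) (dy2 d) (dchi d)) s t -> Dord d t e ->
  clos_refl_trans (pev A) (qstep (rset d e C0) (rset d e C1) (rset d e C2) (dchi d)) s t.
Proof.
  intros s t H; apply clos_rt_rtn1_iff in H; induction H as [|w t Hwt Hsw IH]; intros Hte.
  - apply rt_refl.
  - assert (Hwe : Dord d w e) by (eapply qle_trans; [apply qle_step; exact Hwt|exact Hte]).
    eapply rt_trans; [apply IH; exact Hwe|]. apply rt_step.
    destruct Hwt as [Hw [Ht Hc]]. split; [apply qset_r; auto|split; [apply qset_r; auto|]].
    destruct Hc as [Hc|[[a [-> [-> [H1 H2]]]]|[[a [-> [-> [H1 H2]]]]|[a [-> [-> [H1 H2]]]]]]].
    + left; auto.
    + right; left; exists a; split; [reflexivity|split; [reflexivity|split; [exact Hte|exact H2]]].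
    + right; right; left; exists a; split; [reflexivity|split; [reflexivity|split; [exact Hte|exact H2]]].
    + right; right; right; exists a; split; [reflexivity|split; [reflexivity|split; [exact Hte|exact H2]]].
Qed.

Lemma unrestr_step (A : game) (d : Dev A) (e : pev A) u v :
  qstep (rset d e C0) (rset d e C1) (rset d e C2) (dchi d) u v ->
  qstep (dx d) (dy1 d) (dy2 d) (dchi d) u v.
Proof.
  intros [Hu [Hv Hc]]. apply qset_r in Hu; apply qset_r in Hv.
  split; [apply Hu|split; [apply Hv|]].
  destruct Hc as [Hc|[[a [-> [-> [H1 H2]]]]|[[a [-> [-> [H1 H2]]]]|[a [-> [-> [H1 H2]]]]]]].
  + left; auto.
  + right; left; exists a; repeat split; auto; apply Hv.
  + right; right; left; exists a; repeat split; auto; apply Hv.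
  + right; right; right; exists a; repeat split; auto; apply Hv.
Qed.

Definition qbase (A : game) (d : Dev A) (c : comp) : ev A -> Prop :=
  fun a => qset (dx d) (dy1 d) (dy2 d) (c, a).
Arguments qbase {A}.

Lemma qbase_fc (A : game) (d : Dev A) c : fin_config A (qbase d c).
Proof. destruct c; unfold qbase; simpl; [apply dx_fc|apply dy1_fc|apply dy2_fc]. Qed.

Lemma r_fc (A : game) (d : Dev A) (e : pev A) (c : comp) :
  fin_config A (rset d e c).
Proof.
  pose proof (qbase_fc A d c) as HP. apply (fc_sub A (qbase d c)).
  - exact HP.
  - intros a [Ha _]; auto.
  - intros a b Ha Hba. unfold rset in *. eapply qle_trans; [|exact Ha].
    apply qle_step. destruct Ha as [Ha _].
    destruct HP as [[HPd _] _].
    split; [apply (HPd a b Ha Hba)|split; [exact Ha|left; split; simpl; auto]].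
Qed.

Lemma r_bal (A : game) (d : Dev A) (e : pev A) :
  balanced A (rset d e C0) (rset d e C1) (rset d e C2).
Proof.
  destruct (d_bal d) as [B1 B2]. split.
  - intros a Ha Hp. unfold rset in *.
    destruct Ha as [Ha|Ha]; eapply qle_trans; try exact Ha; apply qle_step;
      (split; [apply B1; [|exact Hp]; destruct Ha as [Ha _]; simpl in Ha; auto|
       split; [apply Ha|]]).
    + right; left; exists a; repeat split; auto; apply Ha.
    + right; right; left; exists a; repeat split; auto; apply Ha.
  - intros a Ha Hp. unfold rset in *.
    assert (Hx : dx d a) by (apply Ha).
    destruct (d_choice d a Hx Hp) as [[Hc Hy]|[Hc Hy]]; [left|right];
      (eapply qle_trans; [|exact Ha]); apply qle_step;
      (split; [simpl; auto|split; [simpl; auto|]]);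
      right; right; right; exists a; rewrite Hc; repeat split; auto.
Qed.

Lemma r_choice (A : game) (d : Dev A) (e : pev A) :
  choice_fun A (rset d e C0) (rset d e C1) (rset d e C2) (dchi d).
Proof.
  intros a Ha Hp. unfold rset in *.
  assert (Hx : dx d a) by (apply Ha).
  destruct (d_choice d a Hx Hp) as [[Hc Hy]|[Hc Hy]]; [left|right]; split; auto;
    (eapply qle_trans; [|exact Ha]); apply qle_step;
    (split; [simpl; auto|split; [simpl; auto|]]);
    right; right; right; exists a; rewrite Hc; repeat split; auto.
Qed.

Lemma r_top_in (A : game) (d : Dev A) (e : pev A) :
  Dset d e -> qset (rset d e C0) (rset d e C1) (rset d e C2) e.
Proof. intros He; apply qset_r; apply qle_refl; exact He. Qed.

Lemma r_top (A : game) (d : Dev A) (e : pev A) : forall u,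
  qset (rset d e C0) (rset d e C1) (rset d e C2) u ->
  qle (rset d e C0) (rset d e C1) (rset d e C2) (dchi d) u e.
Proof.
  intros u Hu. pose proof Hu as Hu'. apply qset_r in Hu'.
  split; [exact Hu|split].
  - apply qset_r. destruct Hu' as [_ [He _]]. apply qle_refl; exact He.
  - apply restr_path; [apply Hu'|]. destruct Hu' as [_ [He _]]. apply qle_refl; exact He.
Qed.

Definition restrict (A : game) (d : Dev A) (e : pev A) (He : Dset d e) : Dev A :=
  @MkDev A (rset d e C0) (rset d e C1) (rset d e C2) (dchi d) e
    (r_fc A d e C0) (r_fc A d e C1) (r_fc A d e C2) (r_bal A d e) (r_choice A d e)
    (r_top_in A d e He) (r_top A d e).
Arguments restrict {A}.

Lemma restrict_le (A : game) (d : Dev A) (e : pev A) (He : Dset d e) :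
  leD (restrict d e He) d.
Proof.
  split; [|split].
  - intros u Hu. apply (qset_r A d e u) in Hu. apply Hu.
  - intros u u' Hu Hu'. apply qset_r in Hu. apply qset_r. eapply qle_trans; eauto.
  - intros u u' Hu Hu'. unfold Dord, Dset in *; simpl in *.
    pose proof Hu as Hu1; pose proof Hu' as Hu1'.
    apply qset_r in Hu1; apply qset_r in Hu1'. split.
    + intros [_ [_ H]]. split; [apply Hu1|split; [apply Hu1'|]].
      eapply crt_mono; [|exact H]. apply unrestr_step.
    + intros [_ [_ H]]. split; [exact Hu|split; [exact Hu'|]].
      apply restr_path; auto.
Qed.

Lemma restrict_delta (A : game) (d : Dev A) (e : pev A) (He : Dset d e) :
  delta (restrict d e He) = e.
Proof. reflexivity. Qed.

Definition ci (b : bool) : comp := if b then C1 else C2.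

Definition mtop (A : game) (e : ev A) (b : bool) : pev A :=
  match polA A e with Plus => (ci b, e) | Minus => (C0, e) end.

Lemma m_fc1 (A : game) (e : ev A) (b : bool) :
  fin_config A (fun a => b = true /\ leA A a e).
Proof.
  apply (fc_sub A _ _ (down_fc A e)).
  - intros a [_ H]; auto.
  - intros a c [H1 H2] H3; split; auto; eapply leA_trans; eauto.
Qed.

Lemma m_fc2 (A : game) (e : ev A) (b : bool) :
  fin_config A (fun a => b = false /\ leA A a e).
Proof.
  apply (fc_sub A _ _ (down_fc A e)).
  - intros a [_ H]; auto.
  - intros a c [H1 H2] H3; split; auto; eapply leA_trans; eauto.
Qed.

Lemma m_bal (A : game) (e : ev A) (b : bool) :
  balanced A (fun a => leA A a e) (fun a => b = true /\ leA A a e) (fun a => b = false /\ leA A a e).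
Proof.
  split.
  - intros a [[_ H]|[_ H]] _; auto.
  - intros a H _; destruct b; [left|right]; auto.
Qed.

Lemma m_choice (A : game) (e : ev A) (b : bool) :
  choice_fun A (fun a => leA A a e) (fun a => b = true /\ leA A a e)
    (fun a => b = false /\ leA A a e) (fun _ => ci b).
Proof. intros a H _; destruct b; [left|right]; simpl; auto. Qed.

Lemma m_top_in (A : game) (e : ev A) (b : bool) :
  qset (fun a => leA A a e) (fun a => b = true /\ leA A a e)
    (fun a => b = false /\ leA A a e) (mtop A e b).
Proof.
  unfold mtop; destruct (polA A e); [destruct b|]; unfold qset; simpl; auto using leA_refl.
Qed.

Lemma m_top (A : game) (e : ev A) (b : bool) : forall u,
  qset (fun a => leA A a e) (fun a => b = true /\ leA A a e)
    (fun a => b = false /\ leA A a e) u ->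
  qle (fun a => leA A a e) (fun a => b = true /\ leA A a e)
    (fun a => b = false /\ leA A a e) (fun _ => ci b) u (mtop A e b).
Proof.
  intros u Hu.
  set (X := fun a => leA A a e). set (Y1 := fun a => b = true /\ leA A a e).
  set (Y2 := fun a => b = false /\ leA A a e).
  assert (Htop := m_top_in A e b). fold X Y1 Y2 in Htop.
  split; [exact Hu|split; [exact Htop|]].
  assert (Lp : forall c a a', qset X Y1 Y2 (c, a) -> qset X Y1 Y2 (c, a') -> leA A a a' ->
     clos_refl_trans (pev A) (qstep X Y1 Y2 (fun _ => ci b)) (c, a) (c, a')).
  { intros c a a' H1 H2 H3; apply rt_step; split; [auto|split; [auto|left; split; unfold qset in *; simpl in *; auto]]. }
  assert (Lup : forall a, leA A a e -> polA A a = Plus ->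
     clos_refl_trans (pev A) (qstep X Y1 Y2 (fun _ => ci b)) (C0, a) (ci b, a)).
  { intros a H1 H2; apply rt_step. split; [unfold qset in *; simpl in *; exact H1|split].
    - destruct b; unfold qset in *; simpl in *; unfold Y1, Y2; auto.
    - right; destruct b; [left|right; left]; exists a; repeat split; auto. }
  assert (Ldn : forall a, leA A a e -> polA A a = Minus ->
     clos_refl_trans (pev A) (qstep X Y1 Y2 (fun _ => ci b)) (ci b, a) (C0, a)).
  { intros a H1 H2; apply rt_step. split; [|split; [unfold qset in *; simpl in *; exact H1|]].
    - destruct b; unfold qset in *; simpl in *; unfold Y1, Y2; auto.
    - right; right; right; exists a; repeat split; auto. rewrite H2; reflexivity. }
  assert (Hee := leA_refl A e).
  destruct u as [c a].
  assert (Hci : forall c', qset X Y1 Y2 (c', a) -> c' = C0 \/ (c' = ci b /\ leA A a e)).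
  { intros c' H; destruct c'; [left; auto|right|right]; destruct b; unfold qset in *; simpl in *;
      unfold Y1, Y2 in *; destruct H as [H1 H2]; try discriminate; auto. }
  assert (Hae : leA A a e) by (destruct (Hci c Hu) as [->|[_ H]]; [exact Hu|exact H]).
  assert (Hsci : forall a', leA A a' e -> qset X Y1 Y2 (ci b, a')).
  { intros a' H; destruct b; unfold qset in *; simpl in *; unfold Y1, Y2; auto. }
  unfold mtop in *; destruct (polA A e) eqn:Epe.
  - destruct (Hci c Hu) as [->|[-> _]].
    + eapply rt_trans; [apply (Lp C0 a e); unfold qset in *; simpl in *; auto|]. apply Lup; auto.
    + apply Lp; auto.
  - destruct (Hci c Hu) as [->|[-> _]].
    + apply Lp; unfold qset in *; simpl in *; auto.
    + destruct (polA A a) eqn:Epa.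
      * eapply rt_trans; [apply (Lp (ci b) a e); auto|]. apply Ldn; auto.
      * eapply rt_trans; [apply Ldn; auto|]. apply Lp; unfold qset in *; simpl in *; auto.
Qed.

Definition mk (A : game) (e : ev A) (b : bool) : Dev A :=
  @MkDev A (fun a => leA A a e) (fun a => b = true /\ leA A a e)
    (fun a => b = false /\ leA A a e) (fun _ => ci b) (mtop A e b)
    (down_fc A e) (m_fc1 A e b) (m_fc2 A e b) (m_bal A e b) (m_choice A e b)
    (m_top_in A e b) (m_top A e b).

Lemma mk_reach (A : game) (e : ev A) (b : bool) : polA A e = Minus ->
  forall t, Dord (mk A e b) (C0, e) t -> t = (C0, e).
Proof.
  intros Hp t [_ [_ H]]. apply clos_rt_rt1n_iff in H.
  remember (C0, e) as s eqn:Es. revert Es.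
  induction H as [|s w t Hsw Hwt IH]; intros Es; auto.
  subst s. enough (Hw0 : w = (C0, e)) by (rewrite (IH Hw0); exact Hw0).
  destruct Hsw as [_ [Hw Hc]].
  destruct Hc as [[H1 H2]|[[a [E1 [E2 [H1 H2]]]]|[[a [E1 [E2 [H1 H2]]]]|[a [E1 [E2 [H1 H2]]]]]]].
  - destruct w as [c a]; simpl in *; subst c. f_equal. apply leA_antisym; auto.
  - injection E1 as <-; rewrite Hp in H2; discriminate.
  - injection E1 as <-; rewrite Hp in H2; discriminate.
  - simpl in E1; destruct b; discriminate.
Qed.

Lemma in_union (A : game) (X : Dev A -> Prop) (d : Dev A) c a :
  downD X d -> delta d = (c, a) -> exists d', X d' /\ Dset d' (c, a).
Proof.
  intros [d' [HX Hle]] Hd. exists d'; split; auto. apply (proj1 Hle).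
  rewrite <- Hd. apply (dtop_in d).
Qed.

Lemma converse (A : game) (hrf : race_free A) (hnn : no_neg_conflict A) :
  D_deterministic A.
Proof.
  intros X [LX HLX] HNeg.
  set (Neg := fun d => downD X d /\ polD d = Minus) in *.
  set (u := fun a => exists d, X d /\ dx d a).
  assert (Hfu : forall (P : Dev A -> ev A -> Prop), (forall d, finite (P d)) ->
            finite (fun a => exists d, X d /\ P d a)).
  { intros P HP. eapply finite_sub; [apply (finite_union _ _ LX P HP)|].
    intros a [d [Hd Ha]]; exists d; auto. }
  destruct HNeg as [N0 _].
  assert (Hu : ConA A u).
  { destruct (Hfu (fun d => dx d) (fun d => proj2 (dx_fc d))) as [lu Hlu].
    apply (key A hrf hnn _ N0 lu (S (cnt u lu)) u Hlu (le_n _)).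
    - intros a b [d [Hd Ha]] Hba; exists d; split; auto.
      exact (proj1 (proj1 (dx_fc d)) a b Ha Hba).
    - intros a b [d [Hd Ha]] Hp Hba.
      assert (Ha' : Dset d (C0, a)) by exact Ha.
      set (r := restrict d (C0, a) Ha').
      assert (Hb : Dset r (C0, b)).
      { apply qset_r. apply qle_step. split; [|split; [exact Ha|left; split; simpl; auto]].
        exact (proj1 (proj1 (dx_fc d)) a b Ha Hba). }
      exists (restrict r (C0, b) Hb); split; [|reflexivity].
      exists r; split; [|apply restrict_le].
      split; [exists d; split; [exact Hd|apply restrict_le]|].
      unfold polD, polP; simpl; rewrite Hp; reflexivity. }
  assert (Hv : forall (P : Dev A -> ev A -> Prop) (HPf : forall d, fin_config A (P d)),
            (forall d a, P d a -> polA A a = Plus -> dx d a) ->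
            ConA A (fun a => exists d, X d /\ P d a)).
  { intros P HPf HPb.
    destruct (Hfu P (fun d => proj2 (HPf d))) as [lv Hlv].
    apply (key A hrf hnn _ Hu lv (S (cnt _ lv)) _ Hlv (le_n _)).
    - intros a b [d [Hd Ha]] Hba; exists d; split; auto.
      exact (proj1 (proj1 (HPf d)) a b Ha Hba).
    - intros a b [d [Hd Ha]] Hp Hba. exists d; split; auto.
      exact (proj1 (proj1 (dx_fc d)) a b (HPb d a Ha Hp) Hba). }
  assert (H1 := Hv (fun d => dy1 d) (fun d => dy1_fc d)
                   (fun d a Ha Hp => proj1 (d_bal d) a (or_introl Ha) Hp)).
  assert (H2 := Hv (fun d => dy2 d) (fun d => dy2_fc d)
                   (fun d a Ha Hp => proj1 (d_bal d) a (or_intror Ha) Hp)).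
  split; [|split].
  - apply (ConA_sub A _ _ Hu). intros a [d [Hd Hdl]].
    destruct (in_union A X d C0 a Hd Hdl) as [d' [? ?]]; exists d'; auto.
  - apply (ConA_sub A _ _ H1). intros a [d [Hd Hdl]].
    destruct (in_union A X d C1 a Hd Hdl) as [d' [? ?]]; exists d'; auto.
  - apply (ConA_sub A _ _ H2). intros a [d [Hd Hdl]].
    destruct (in_union A X d C2 a Hd Hdl) as [d' [? ?]]; exists d'; auto.
Qed.

Lemma forward (A : game) : D_deterministic A -> no_neg_conflict A.
Proof.
  intros Hdet x a1 a2 Hx Hn1 Hn2 Hp1 Hp2 K1 K2.
  split.
  { intros e e' He Hle. destruct He as [[He| ->]| ->].
    - left; left; exact (proj1 Hx e e' He Hle).
    - left; exact (proj1 K1 a1 e' (or_intror eq_refl) Hle).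
    - destruct (proj1 K2 a2 e' (or_intror eq_refl) Hle) as [H| ->]; [left; left|right]; auto. }
  intros Y [lY HlY] HY. apply NNPP; intro HnY.
  set (bc := fun c : ev A => if excluded_middle_informative (c = a2) then false else true).
  set (X := fun d => exists c, Y c /\ d = mk A c (bc c)).
  assert (HfX : finite X).
  { exists (map (fun c => mk A c (bc c)) lY). intros d [c [Hc ->]]; apply (in_map (fun c => mk A c (bc c))); auto. }
  set (Neg := fun d => downD X d /\ polD d = Minus).
  assert (Info : forall d k a, downD Neg d -> delta d = (k, a) ->
     exists d'' c, Y c /\ leD d'' (mk A c (bc c)) /\ polD d'' = Minus /\
       Dset d'' (k, a) /\ Dset (mk A c (bc c)) (k, a)).
  { intros d k a [d'' [[[d' [[c [Hc ->]] Hle']] Hpol] Hle]] Hdl.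
    assert (Hd : Dset d (k, a)) by (rewrite <- Hdl; apply (dtop_in d)).
    assert (Hd'' : Dset d'' (k, a)) by (apply (proj1 Hle); auto).
    exists d'', c; split; [exact Hc|split; [exact Hle'|split; [exact Hpol|split; [exact Hd''|apply (proj1 Hle'); auto]]]]. }
  assert (Hfin : forall k, finite (fun a => exists d, downD Neg d /\ delta d = (k, a))).
  { intros k. eapply finite_sub;
      [apply (finite_union _ _ lY (fun c a => leA A a c) (fun c => leA_finite_down A c))|].
    intros a [d [Hd Hdl]]. destruct (Info d k a Hd Hdl) as [d'' [c [Hc [_ [_ [_ Hm]]]]]].
    exists c; split; auto; destruct k; [exact Hm|apply Hm|apply Hm]. }
  assert (HC : ConD X).
  { apply Hdet; [exact HfX|]. split; [|split].
    - apply (config_con A x _ Hx (Hfin C0)). intros a [d [Hd Hdl]].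
      destruct (Info d C0 a Hd Hdl) as [d'' [c [Hc [Hle [Hpol [Hd'' Hm]]]]]].
      simpl in Hm.
      destruct (classic (a = c)) as [<-|Hne].
      + destruct (classic (x a)) as [Hxa|Hxa]; auto. exfalso.
        assert (Hpa : polA A a = Minus).
        { destruct (HY a Hc) as [[H| ->]| ->]; auto; contradiction. }
        assert (Ho : Dord d'' (C0, a) (dtop d'')) by (apply (dtop_top d''); auto).
        apply (proj2 (proj2 Hle) (C0, a) (dtop d'') Hd'' (dtop_in d'')) in Ho.
        apply (mk_reach A a (bc a) Hpa) in Ho.
        unfold polD, delta, polP in Hpol. rewrite Ho in Hpol; simpl in Hpol.
        rewrite Hpa in Hpol; discriminate.
      + destruct (HY c Hc) as [[H| ->]| ->].
        * exact (proj1 Hx c a H Hm).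
        * destruct (proj1 K1 a1 a (or_intror eq_refl) Hm) as [H| ->]; auto; contradiction.
        * destruct (proj1 K2 a2 a (or_intror eq_refl) Hm) as [H| ->]; auto; contradiction.
    - apply (config_con A _ _ K1 (Hfin C1)). intros a [d [Hd Hdl]].
      destruct (Info d C1 a Hd Hdl) as [d'' [c [Hc [_ [_ [_ [Hb Hm]]]]]]].
      unfold bc in Hb. destruct (excluded_middle_informative (c = a2)); [discriminate|].
      destruct (HY c Hc) as [[H| ->]| ->]; [left; exact (proj1 Hx c a H Hm)| |contradiction].
      exact (proj1 K1 a1 a (or_intror eq_refl) Hm).
    - apply (config_con A _ _ K2 (Hfin C2)). intros a [d [Hd Hdl]].
      destruct (Info d C2 a Hd Hdl) as [d'' [c [Hc [_ [_ [_ [Hb Hm]]]]]]].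
      unfold bc in Hb. destruct (excluded_middle_informative (c = a2)) as [->|]; [|discriminate].
      exact (proj1 K2 a2 a (or_intror eq_refl) Hm). }
  apply HnY. destruct HC as [H0 _]. apply (ConA_sub A _ _ H0).
  intros c Hc.
  assert (Hcc : Dset (mk A c (bc c)) (C0, c)) by exact (leA_refl A c).
  exists (restrict (mk A c (bc c)) (C0, c) Hcc); split; [|reflexivity].
  exists (mk A c (bc c)); split; [exists c; auto|apply restrict_le].
Qed.

Theorem mainTheorem16 (A : game) (hrf : race_free A) :
  D_deterministic A <-> no_neg_conflict A.
Proof. split; [apply forward|apply converse; auto]. Qed.
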